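(* Let $f$, $Q$, $L$, $d_Q$ be as in the context, let $x^*\in Q$ be a minimizer of $f$ over $Q$ with $f^*=f(x^* )$, let $T\in\mathbb{N}_0$, and let the sequences $(z_t)$, $(\hat x_t)$, $(u_t)$, $(\Gamma_t)$, $(L_t)$ be generated by the algorithm described in the context. Then \[ f(u_T)-f^*\le\frac{1}{\Gamma_T}\Big[L_Td_Q(x^* )+\sum_{t=0}^{T-1}(L_t-L_{t+1})\Big(d_Q(z_{t+1})-\tfrac12\|z_t-\hat x_{t+1}\|^2\Big)\Big]. \]
   Context: $\mathbb{R}^n$ carries the standard scalar product $\langle\cdot,\cdot\rangle$ and a (possibly different) norm $\|\cdot\|$, with dual norm $\|u\|_*=\max\{\langle u,x\rangle:\|x\|=1\}$. $Q\subseteq\mathbb{R}^n$ is closed and convex; $f:\mathbb{R}^n\to\mathbb{R}$ is convex, differentiable, attains its minimum on $Q$, and $L>0$ satisfies $\|\nabla f(x)-\nabla f(y)\|_*\le L\|x-y\|$ for all $x,y\in Q$. A distance-generating function for $Q$ is $d_Q:Q\to\mathbb{R}_{\ge0}$ that is continuous on $Q$, strongly convex with modulus 1 w.r.t. $\|\cdot\|$, and whose subdifferential admits a continuous selection $d_Q'$ on $Q^o:=\{x\in Q:\partial d_Q(x)\neq\emptyset\}$. For $z\in Q^o$, $V_z(x)=d_Q(x)-d_Q(z)-\langle d_Q'(z),x-z\rangle$ and $\mathrm{Prox}_{Q,z}(s)=\arg\min_{x\in Q}\{\langle s,x-z\rangle+V_z(x)\}$. The $d_Q$-center is $c(d_Q)=\arg\min_{x\in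 Q}d_Q(x)$, and it is assumed that $d_Q(c(d_Q))=0$. Algorithm: choose $T\in\mathbb{N}_0$ and numbers $(\gamma_t)_{t=0}^{T+1}$ with $\gamma_0\in(0,1]$, $\gamma_t\ge0$ and $\gamma_t^2\le\Gamma_t:=\sum_{k=0}^t\gamma_k$ for all $0\le t\le T+1$. Set $L_0=L$, $x_0=c(d_Q)$, $u_0=\arg\min_{x\in Q}\{\gamma_0(f(x_0)+\langle\nabla f(x_0),x-x_0\rangle)+L_0d_Q(x)\}$, $z_0=u_0$, $\tau_0=\gamma_1/\Gamma_1$, $x_1=\tau_0z_0+(1-\tau_0)u_0$, $\hat x_1=\mathrm{Prox}_{Q,z_0}(\gamma_1\nabla f(x_1)/L_0)$, $u_1=\tau_0\hat x_1+(1-\tau_0)u_0$. For $t=1,\dots,T$: choose $0<L_t\le L$ with $f(u_t)\le f(x_t)+\langle\nabla f(x_t),u_t-x_t\rangle+\frac{L_t}{2}\|u_t-x_t\|^2$; set $z_t=\arg\min_{x\in Q}\{\sum_{k=0}^t\gamma_k(f(x_k)+\langle\nabla f(x_k),x-x_k\rangle)+L_td_Q(x)\}$; set $\tau_t=\gamma_{t+1}/\Gamma_{t+1}$ and $x_{t+1}=\tau_tz_t+(1-\tau_t)u_t$; set $\hat x_{t+1}=\mathrm{Prox}_{Q,z_t}(\gamma_{t+1}\nabla f(x_{t+1})/L_t)$; set $u_{t+1}=\tau_t\hat x_{t+1}+(1-\tau_t)u_t$. *)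

(* Defs.v *)
From HB Require Import structures.
From mathcomp Require Import all_boot all_order all_algebra.
From mathcomp Require Import all_classical all_reals all_analysis.
Set Implicit Arguments. Unset Strict Implicit. Unset Printing Implicit Defensive.
Import Order.TTheory GRing.Theory Num.Theory.
Import numFieldNormedType.Exports.
Local Open Scope classical_set_scope.
Local Open Scope ring_scope.

Section Defs.
Variables (R : realType) (n : nat).
Local Notation vec := 'rV[R]_n.

Definition dotv (u v : vec) : R := \sum_(i < n) u ord0 i * v ord0 i.

Definition is_norm (nrm : vec -> R) : Prop :=
  [/\ forall x, 0 <= nrm x,
      forall x, nrm x = 0 -> x = 0,
      forall (a : R) x, nrm (a *: x) = `|a| * nrm x
    & forall x y, nrm (x + y) <= nrm x + nrm y].

Definition dual_norm (nrm : vec -> R) (u : vec) : R :=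
  sup [set dotv u x | x in [set x | nrm x = 1]].

Definition convex_setv (Q : set vec) : Prop :=
  forall x y (lam : R), Q x -> Q y -> 0 <= lam <= 1 ->
    Q (lam *: x + (1 - lam) *: y).

Definition convex_funv (f : vec -> R) : Prop :=
  forall x y (lam : R), 0 <= lam <= 1 ->
    f (lam *: x + (1 - lam) *: y) <= lam * f x + (1 - lam) * f y.

Definition is_gradient (f : vec -> R) (gradf : vec -> vec) : Prop :=
  forall x, differentiable f x /\ forall v, 'd f x v = dotv (gradf x) v.

Definition strongly_convex1 (nrm : vec -> R) (Q : set vec) (d : vec -> R) : Prop :=
  forall x y (lam : R), Q x -> Q y -> 0 <= lam <= 1 ->
    d (lam *: x + (1 - lam) *: y) <=
      lam * d x + (1 - lam) * d y - 2^-1 * lam * (1 - lam) * (nrm (x - y)) ^+ 2.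

Definition subdiff (Q : set vec) (d : vec -> R) (x : vec) : set vec :=
  [set g | forall y, Q y -> d x + dotv g (y - x) <= d y].

Definition Qo (Q : set vec) (d : vec -> R) : set vec :=
  [set x | Q x /\ subdiff Q d x !=set0].

Definition dist_gen (nrm : vec -> R) (Q : set vec) (d : vec -> R)
    (d' : vec -> vec) : Prop :=
  [/\ forall x, Q x -> 0 <= d x,
      {within Q, continuous d},
      strongly_convex1 nrm Q d,
      forall x, Qo Q d x -> subdiff Q d x (d' x)
    & {within Qo Q d, continuous d'}].

Definition bregman (d : vec -> R) (d' : vec -> vec) (z x : vec) : R :=
  d x - d z - dotv (d' z) (x - z).

Definition is_argmin (Q : set vec) (phi : vec -> R) (x : vec) : Prop :=
  Q x /\ forall y, Q y -> phi x <= phi y.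

Definition is_prox (Q : set vec) (d : vec -> R) (d' : vec -> vec)
    (z s x : vec) : Prop :=
  is_argmin Q (fun y => dotv s (y - z) + bregman d d' z y) x.

Definition linmod (f : vec -> R) (gradf : vec -> vec) (xk y : vec) : R :=
  f xk + dotv (gradf xk) (y - xk).

End Defs.

Definition Gam (R : realType) (gamma : nat -> R) (t : nat) : R :=
  \sum_(k < t.+1) gamma k.

(* Main.v *)
Require Import Defs.
From HB Require Import structures.
From mathcomp Require Import all_boot all_order all_algebra.
From mathcomp Require Import all_classical all_reals all_analysis.
From mathcomp Require Import ring lra.
Set Implicit Arguments. Unset Strict Implicit. Unset Printing Implicit Defensive.
Import Order.TTheory GRing.Theory Num.Theory.
Import numFieldNormedType.Exports.
Local Open Scope classical_set_scope.
Local Open Scope ring_scope.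

Section Basic.
Variables (R : realType) (n : nat).
Local Notation vec := 'rV[R]_n.

Lemma dotvDl (u v w : vec) : dotv (u + v) w = dotv u w + dotv v w.
Proof. by rewrite /dotv -big_split; apply: eq_bigr => i _; rewrite mxE mulrDl. Qed.
Lemma dotvC (u v : vec) : dotv u v = dotv v u.
Proof. by apply: eq_bigr => i _; rewrite mulrC. Qed.
Lemma dotvDr (u v w : vec) : dotv w (u + v) = dotv w u + dotv w v.
Proof. by rewrite dotvC dotvDl !(dotvC w). Qed.
Lemma dotvZl a (u w : vec) : dotv (a *: u) w = a * dotv u w.
Proof. by rewrite /dotv mulr_sumr; apply: eq_bigr => i _; rewrite mxE mulrA. Qed.
Lemma dotvZr a (u w : vec) : dotv w (a *: u) = a * dotv w u.
Proof. by rewrite dotvC dotvZl dotvC. Qed.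
Lemma dotvNl (u w : vec) : dotv (- u) w = - dotv u w.
Proof. by rewrite -scaleN1r dotvZl mulN1r. Qed.
Lemma dotvNr (u w : vec) : dotv w (- u) = - dotv w u.
Proof. by rewrite -scaleN1r dotvZr mulN1r. Qed.
Lemma dotvBl (u v w : vec) : dotv (u - v) w = dotv u w - dotv v w.
Proof. by rewrite dotvDl dotvNl. Qed.
Lemma dotvBr (u v w : vec) : dotv w (u - v) = dotv w u - dotv w v.
Proof. by rewrite dotvDr dotvNr. Qed.
Lemma dotv0r (w : vec) : dotv w 0 = 0.
Proof. by rewrite /dotv big1 // => i _; rewrite mxE mulr0. Qed.
Lemma dotv0l (w : vec) : dotv 0 w = 0.
Proof. by rewrite dotvC dotv0r. Qed.

Lemma entry_le (v : vec) i : `|v ord0 i| <= `|v|.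
Proof.
have /mapP[j Hj ->] : `|v ord0 i| \in [seq `|v x.1 x.2| | x : 'I_1 * 'I_n].
  by apply/mapP; exists (ord0, i) => //=; rewrite mem_enum.
by rewrite (_ : `|v| = mx_norm v) // mx_normrE; apply/bigmax_geP; right => /=; exists j.
Qed.

Lemma dotv_bound (u v : vec) : `|dotv u v| <= n%:R * `|u| * `|v|.
Proof.
rewrite /dotv; apply: le_trans (ler_norm_sum _ _ _) _.
rewrite -mulrA mulr_natl -[X in _ *+ X](card_ord n) -sumr_const.
apply: ler_sum => i _; rewrite normrM; apply: ler_pM => //; exact: entry_le.
Qed.

Lemma norm_sq_le (v : vec) : `|v| ^+ 2 <= dotv v v.
Proof.
have S0 : 0 <= dotv v v by apply: sumr_ge0 => i _; rewrite -expr2 sqr_ge0.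
rewrite (_ : `|v| = mx_norm v) // mx_normrE.
elim/big_ind: _ => //.
- by rewrite expr0n.
- move=> a b ha hb; rewrite /Num.max; by case: ifP.
- move=> [i j] _ /=; rewrite (ord1 i) real_normK ?num_real //.
  rewrite /dotv (bigD1 j) //= -expr2 lerDl.
  by apply: sumr_ge0 => k _; rewrite -expr2 sqr_ge0.
Qed.

Lemma dotv_sq_ge0 (v : vec) : 0 <= dotv v v.
Proof. by apply: sumr_ge0 => i _; rewrite -expr2 sqr_ge0. Qed.

Lemma loclip_cont (g : vec -> R) :
  (forall x, exists K r, 0 < r /\ 0 <= K /\
     forall y, `|x - y| < r -> `|g x - g y| <= K * `|x - y|) -> continuous g.
Proof.
move=> H x; have [K [r [r0 [K0 HK]]]] := H x.
apply/(@cvgrPdist_lt _ _ _ (nbhs x) _ g (g x)) => eps eps0; apply/(@nbhs_normP R 'rV[R]_n x).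
exists (Num.min r (eps / (K + 1))) => /=.
  by rewrite lt_min r0 divr_gt0 // ltr_wpDl.
move=> y /=; rewrite lt_min => /andP[yr ye].
apply: le_lt_trans (HK y yr) _.
have K1 : 0 < K + 1 by rewrite ltr_wpDl.
apply: le_lt_trans (_ : K * `|x - y| <= (K+1) * `|x - y|) _.
  by rewrite ler_wpM2r // lerDl.
by rewrite mulrC -ltr_pdivlMr.
Qed.

Lemma bnd_set (A : set vec) B : (forall v, A v -> `|v| <= B) -> bounded_set A.
Proof.
move=> H; rewrite /bounded_set /=; exists B; split; first exact: num_real.
by move=> M hM v Av; apply: le_trans (H _ Av) (ltW hM).
Qed.

End Basic.
Section Norm.
Variables (R : realType) (n : nat) (nrm : 'rV[R]_n -> R).
Hypothesis Hn : is_norm nrm.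
Local Notation vec := 'rV[R]_n.

Lemma nrm_ge0 v : 0 <= nrm v. Proof. by case: Hn. Qed.
Lemma nrmZ a v : nrm (a *: v) = `|a| * nrm v. Proof. by case: Hn. Qed.
Lemma nrm_tri v w : nrm (v + w) <= nrm v + nrm w. Proof. by case: Hn. Qed.
Lemma nrm_eq0 v : nrm v = 0 -> v = 0. Proof. by case: Hn => _ H _ _; exact: H. Qed.
Lemma nrm0 : nrm 0 = 0.
Proof. by rewrite -(scale0r (0 : vec)) nrmZ normr0 mul0r. Qed.
Lemma nrmN v : nrm (- v) = nrm v.
Proof. by rewrite -scaleN1r nrmZ normrN normr1 mul1r. Qed.
Lemma nrmB v w : nrm (v - w) = nrm (w - v).
Proof. by rewrite -nrmN opprB. Qed.

Lemma nrm_sum (F : 'I_n -> vec) : nrm (\sum_i F i) <= \sum_i nrm (F i).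
Proof.
apply: (big_rec2 (fun a b => nrm a <= b)); first by rewrite nrm0.
move=> i y1 y2 _ H; apply: le_trans (nrm_tri _ _) _; by rewrite lerD2l.
Qed.

Definition Cn := \sum_(i < n) nrm ('e_i : vec).
Lemma Cn_ge0 : 0 <= Cn. Proof. by apply: sumr_ge0 => i _; exact: nrm_ge0. Qed.

Lemma nrm_up v : nrm v <= Cn * `|v|.
Proof.
rewrite {1}(row_sum_delta v); apply: le_trans (nrm_sum _) _.
rewrite /Cn mulr_suml; apply: ler_sum => i _; rewrite nrmZ mulrC.
by apply: ler_wpM2l; [exact: nrm_ge0 | exact: entry_le].
Qed.

Lemma nrm_lip x y : `|nrm x - nrm y| <= Cn * `|x - y|.
Proof.
have h1 : nrm x <= nrm (x - y) + nrm y by rewrite -{1}(subrK y x); exact: nrm_tri.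
have h2 : nrm y <= nrm (x - y) + nrm x.
  by rewrite nrmB -{1}(subrK x y); exact: nrm_tri.
have h3 := nrm_up (x - y).
rewrite ler_norml; apply/andP; split; lra.
Qed.

Lemma nrm_cont : continuous nrm.
Proof.
apply: loclip_cont => x; exists Cn, 1; split => //; split; first exact: Cn_ge0.
by move=> y _; exact: nrm_lip.
Qed.

Lemma nrm_lower : exists2 m, 0 < m & forall v : vec, m * `|v| <= nrm v.
Proof.
pose S := [set v : vec | 1 <= `|v|] `&` [set v : vec | `|v| <= 1].
have [[v0 Sv0]|S0] := pselect (S !=set0); last first.
  exists 1 => // v; rewrite mul1r.
  have [->|vn0] := eqVneq v 0; first by rewrite normr0 nrm_ge0.
  exfalso; apply: S0; exists (`|v|^-1 *: v); rewrite /S /=.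
  rewrite normrZ normrV ?unitfE ?normr_eq0 // normr_id mulVf ?normr_eq0 //.
have cS : compact S.
  apply: bounded_closed_compact; first by apply: (@bnd_set _ _ _ 1) => v [].
  apply: closedI.
    by apply: (closed_comp _ (@closed_ge _ 1)) => v _; exact: norm_continuous.
  by apply: (closed_comp _ (@closed_le _ 1)) => v _; exact: norm_continuous.
have [c cSc cmin] := EVT_min_rV (ex_intro _ v0 Sv0) cS (continuous_subspaceT nrm_cont).
move: (cSc); rewrite inE => -[c1 c2].
have cpos : 0 < nrm c.
  rewrite lt_def nrm_ge0 andbT; apply/eqP => /nrm_eq0 c0.
  by move: c1; rewrite /= c0 normr0 ler10.
exists (nrm c) => // v.
have [->|vn0] := eqVneq v 0; first by rewrite normr0 mulr0 nrm_ge0.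
have vpos : 0 < `|v| by rewrite normr_gt0.
have Sw : (`|v|^-1 *: v) \in S.
  by rewrite inE /S /= normrZ normrV ?unitfE ?normr_eq0 // normr_id mulVf ?normr_eq0.
have := cmin _ Sw; rewrite nrmZ normrV ?unitfE ?normr_eq0 // normr_id.
by rewrite ler_pdivlMl // mulrC.
Qed.

Lemma dual_bound (g h : vec) : dotv g h <= dual_norm nrm g * nrm h.
Proof.
have [m m0 Hm] := nrm_lower.
have [->|hn0] := eqVneq h 0; first by rewrite dotv0r nrm0 mulr0.
have hpos : 0 < nrm h.
  by rewrite lt_def nrm_ge0 andbT; apply/eqP => /nrm_eq0; apply/eqP.
set A := [set dotv g x | x in [set x | nrm x = 1]].
have Aw : A (dotv g ((nrm h)^-1 *: h)).
  exists ((nrm h)^-1 *: h) => //=.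
  by rewrite nrmZ normrV ?unitfE ?gt_eqF // gtr0_norm // mulVf ?gt_eqF.
have hs : has_sup A.
  split; first by exists (dotv g ((nrm h)^-1 *: h)).
  exists (n%:R * `|g| / m) => _ [y /= y1 <-].
  apply: (le_trans (ler_norm (dotv g y))); apply: le_trans (dotv_bound _ _) _.
  rewrite ler_pdivlMr // -!mulrA ler_wpM2l // mulrC.
  by rewrite (mulrC `|y| m) -[leRHS]mul1r ler_wpM2r // -y1 Hm.
have := sup_upper_bound hs Aw; rewrite dotvZr.
by rewrite /dual_norm -/A ler_pdivrMl // mulrC.
Qed.

End Norm.
Section Reals.
Variable R : realType.

Lemma lim_lem1 (A B : R) : 0 <= B ->
  (forall l, 0 < l < 1 -> (1 - l) * B <= A) -> B <= A.
Proof.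
move=> B0 H; have A2 : B / 2 <= A.
  have h1 : 0 < (1/2 : R) by lra.
  have h2 : (1/2 : R) < 1 by lra.
  have := H (1/2 : R); rewrite h1 h2 => /(_ isT); lra.
have [->|Bp] := eqVneq B 0; first lra.
have Bpos : 0 < B by rewrite lt_def Bp.
rewrite leNgt; apply/negP => AB.
have := H ((B - A) / (2 * B)).
have hl : 0 < (B - A) / (2 * B) < 1.
  apply/andP; split; first by apply: divr_gt0; lra.
  by rewrite ltr_pdivrMr; lra.
have -> : (1 - (B - A) / (2 * B)) * B = B - (B - A) / 2.
  by field; rewrite gt_eqF.
move=> /(_ hl); lra.
Qed.

Lemma lim_lem2 (A B : R) : 0 <= B ->
  (forall t, 0 < t <= 1 -> A <= t * B) -> A <= 0.
Proof.
move=> B0 H; rewrite leNgt; apply/negP => A0.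
have [B00|Bp] := eqVneq B 0.
  by have := H 1; rewrite ltr01 lexx B00 mulr0 => /(_ isT); lra.
have Bpos : 0 < B by rewrite lt_def Bp.
set t := Num.min 1 (A / (2 * B)).
have t0 : 0 < t by rewrite lt_min ltr01 divr_gt0 //; lra.
have t1 : t <= 1 by rewrite ge_min lexx.
have t2 : t <= A / (2*B) by rewrite ge_min lexx orbT.
have := H t; rewrite t0 t1 => /(_ isT) h.
have : t * B <= A/(2*B) * B by rewrite ler_wpM2r.
have -> : A / (2*B) * B = A/2 by field; rewrite gt_eqF.
lra.
Qed.

End Reals.

Section Conv.
Variables (R : realType) (n : nat).
Local Notation vec := 'rV[R]_n.

Lemma grad_ineq (f : vec -> R) gradf : convex_funv f -> is_gradient f gradf ->
  forall x y, f x + dotv (gradf x) (y - x) <= f y.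
Proof.
move=> cf gf x y; set v := y - x.
have [dfx dfE] := gf x.
have hD : 'D_v f x = dotv (gradf x) v by rewrite deriveE // dfE.
have := @diff_derivable _ _ _ f x v dfx; rewrite /derivable => hc.
have : forall eps, 0 < eps -> dotv (gradf x) v <= f y - f x + eps.
  move=> eps eps0; move/cvgrPdist_lt : hc => /(_ eps eps0).
  rewrite -/(derive f x v) hD => /nbhs_normP [r /= r0 Hr].
  pose h := Num.min (r / 2) 1.
  have h0 : 0 < h by rewrite lt_min ltr01 divr_gt0.
  have h1 : h <= 1 by rewrite ge_min lexx orbT.
  have hr : `|0 - h| < r.
    rewrite sub0r normrN gtr0_norm //.
    have : h <= r / 2 by rewrite ge_min lexx.
    lra.
  have := Hr h hr (lt0r_neq0 h0) => /=.
  have conv : f (h *: v + x) <= h * f y + (1 - h) * f x.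
    have -> : h *: v + x = h *: y + (1 - h) *: x.
      by rewrite /v scalerBr scalerBl scale1r addrA addrAC.
    by apply: cf; rewrite (ltW h0) h1.
  have : h^-1 *: (f (h *: v + x) - f x) <= f y - f x.
    rewrite /GRing.scale /= ler_pdivrMl //; lra.
  move=> q1 q2; have := ler_norml.
  rewrite /= in q2.
  have := (ler_norm (dotv (gradf x) v - h^-1 *: (f (h *: v + x) - f x))).
  move: q2 => /ltW q2 q3 _.
  have := le_trans q3 q2; lra.
move=> H; rewrite -lerBrDl; apply/ler_addgt0Pr => eps /H; lra.
Qed.

End Conv.
Section Reals2.
Variable R : realType.

Lemma sum_succ N : \sum_(0 <= k < N) (k.+1)%:R = (N * N.+1)%:R / 2 :> R.
Proof.
elim: N => [|N IH]; first by rewrite big_geq // mul0n mul0r.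
rewrite big_nat_recr //= IH.
have -> : (N.+1 * N.+2 = N * N.+1 + 2 * N.+1)%N by rewrite mulnC -mulnDl addnC.
rewrite natrD natrM (natrM _ 2); by field.
Qed.

Lemma arch_lem (D C : R) : 0 <= C ->
  (forall N : nat, (0 < N)%N -> D <= C + C / N%:R) -> D <= C.
Proof.
move=> C0 H; rewrite leNgt; apply/negP => DC.
have [C00|Cp] := eqVneq C 0.
  by have := H 1%N isT; rewrite C00 mul0r; lra.
have Cpos : 0 < C by rewrite lt_def Cp.
have e0 : 0 < D - C by lra.
set N := (Num.Def.trunc (C / (D - C))).+1.
have hN : C / (D - C) < N%:R by rewrite -truncn_lt_nat ?ltnSn // divr_ge0 // ltW.
have Npos : 0 < N%:R :> R by rewrite ltr0n.
have := H N isT.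
have : C / N%:R < D - C by rewrite ltr_pdivrMr // mulrC -ltr_pdivrMr.
lra.
Qed.

End Reals2.

Section SC.
Variables (R : realType) (n : nat) (nrm : 'rV[R]_n -> R) (Q : set 'rV[R]_n)
  (d : 'rV[R]_n -> R).
Hypothesis Hn : is_norm nrm.
Hypothesis cQ : convex_setv Q.
Hypothesis Hsc : strongly_convex1 nrm Q d.
Local Notation vec := 'rV[R]_n.

Lemma comb_sub (l : R) (y z : vec) : l *: y + (1 - l) *: z - z = l *: (y - z).
Proof. by rewrite scalerBl scale1r scalerBr addrA addrAC addrK. Qed.

Lemma sc_sub (g z y : vec) : Q z -> Q y -> subdiff Q d z g ->
  d z + dotv g (y - z) + 2^-1 * nrm (y - z) ^+ 2 <= d y.
Proof.
move=> Qz Qy sg.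
suff : 2^-1 * nrm (y - z) ^+ 2 <= d y - d z - dotv g (y - z) by lra.
apply: lim_lem1; first by rewrite mulr_ge0 // ?invr_ge0 ?ler0n // sqr_ge0.
move=> l /andP[l0 l1].
have hl : 0 <= l <= 1 by rewrite (ltW l0) (ltW l1).
have Qp := cQ Qy Qz hl.
have h1 := sg _ Qp; rewrite comb_sub dotvZr in h1.
have h2 := Hsc Qy Qz hl.
rewrite -(ler_pM2l l0).
set N2 := nrm (y - z) ^+ 2 in h2 *.
set D := dotv g (y - z) in h1 *.
set dp := d (l *: y + (1 - l) *: z) in h1 h2.
lra.
Qed.

Lemma d_conv (x y : vec) (l : R) : Q x -> Q y -> 0 <= l <= 1 ->
  d (l *: x + (1 - l) *: y) <= l * d x + (1 - l) * d y.
Proof.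
move=> Qx Qy /andP[l0 l1]; have := Hsc Qx Qy (introT andP (conj l0 l1)).
have : 0 <= 2^-1 * l * (1 - l) * nrm (x - y) ^+ 2.
  apply: mulr_ge0; last exact: sqr_ge0.
  by rewrite !mulr_ge0 // ?invr_ge0 ?ler0n // subr_ge0.
lra.
Qed.

End SC.
Section Desc.
Variables (R : realType) (n : nat) (nrm : 'rV[R]_n -> R) (Q : set 'rV[R]_n)
  (f : 'rV[R]_n -> R) (gradf : 'rV[R]_n -> 'rV[R]_n) (L : R).
Hypothesis Hn : is_norm nrm.
Hypothesis cQ : convex_setv Q.
Hypothesis cf : convex_funv f.
Hypothesis gf : is_gradient f gradf.
Hypothesis Lip : forall y w, Q y -> Q w ->
     dual_norm nrm (gradf y - gradf w) <= L * nrm (y - w).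
Hypothesis L0 : 0 <= L.

Lemma descent y w : Q y -> Q w ->
  f w <= f y + dotv (gradf y) (w - y) + L / 2 * nrm (w - y) ^+ 2.
Proof.
move=> Qy Qw; set h := w - y; set D := dotv (gradf y) h.
set n2 := nrm h ^+ 2.
have n20 : 0 <= n2 by exact: sqr_ge0.
have C0 : 0 <= L / 2 * n2 by rewrite mulr_ge0 // divr_ge0.
suff : f w - f y - D <= L / 2 * n2 by lra.
apply: arch_lem => // N N0.
have Npos : 0 < N%:R :> R by rewrite ltr0n.
have Nipos : 0 < N%:R^-1 :> R by rewrite invr_gt0.
have Nn0 : N%:R != 0 :> R by rewrite gt_eqF.
pose p (k : nat) := y + (k%:R / N%:R) *: h.
have Qp : forall k, (k <= N)%N -> Q (p k).
  move=> k kN; have -> : p k = (k%:R/N%:R) *: w + (1 - k%:R/N%:R) *: y.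
    by rewrite /p /h scalerBr scalerBl scale1r addrCA.
  apply: cQ => //; rewrite divr_ge0 ?ler0n //= ler_pdivrMr // mul1r ler_nat //.
have step : forall k, (0 <= k < N)%N -> f (p k.+1) - f (p k) <=
    N%:R^-1 * D + k.+1%:R * (L * n2 / N%:R ^+ 2).
  move=> k /andP[_ kN].
  have g := grad_ineq cf gf (p k.+1) (p k).
  have e1 : p k - p k.+1 = - (N%:R^-1 *: h).
    rewrite /p; have -> : k.+1%:R / N%:R = k%:R / N%:R + N%:R^-1 :> R by rewrite -natr1; field.
    by rewrite scalerDl addrA opprD addrA subrr add0r.
  rewrite e1 dotvNr dotvZr in g.
  have hq : dotv (gradf (p k.+1)) h <= D + L * (k.+1%:R / N%:R) * n2.
    have h1 := dual_bound Hn (gradf (p k.+1) - gradf y) h.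
    have h2 := Lip (Qp _ kN) Qy.
    have e2 : p k.+1 - y = (k.+1%:R/N%:R) *: h by rewrite /p addrAC subrr add0r.
    rewrite e2 nrmZ // ger0_norm ?divr_ge0 ?ler0n // in h2.
    have h3 := ler_wpM2r (nrm_ge0 Hn h) h2.
    rewrite dotvBl in h1; rewrite /n2 /D expr2; lra.
  have h4 := ler_wpM2l (ltW Nipos) hq.
  have -> : N%:R^-1 * D + k.+1%:R * (L * n2 / N%:R ^+ 2) =
            N%:R^-1 * (D + L * (k.+1%:R / N%:R) * n2) by field.
  lra.
have hs : f w - f y = \sum_(0 <= k < N) (f (p k.+1) - f (p k)).
  rewrite telescope_sumr // /p mulfV // scale1r mul0r scale0r addr0.
  by rewrite /h [y + _]addrC subrK.
have := ler_sum_nat step; rewrite -hs big_split /= sumr_const_nat subn0.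
rewrite -mulr_suml sum_succ -[_ *+ N]mulr_natr.
have -> : (N * N.+1)%:R / 2 * (L * n2 / N%:R ^+ 2) = L / 2 * n2 + L / 2 * n2 / N%:R.
  by rewrite natrM -natr1; field.
have -> : N%:R^-1 * D * N%:R = D by field.
lra.
Qed.

End Desc.
Lemma within_cont (R : realType) n (A : set 'rV[R]_n) (g : 'rV[R]_n -> 'rV[R]_n) z :
  A z -> {within A, continuous g} -> forall eta, 0 < eta ->
  exists2 del, 0 < del & forall p, A p -> `|z - p| < del -> `|g z - g p| < eta.
Proof.
move=> zA hg eta eta0.
have := (proj1 (subspace_continuousP A g) hg) z zA.
move/(@cvgrPdist_lt _ _ _ (within A (nbhs z)) _ g (g z)) => /(_ eta eta0).
rewrite /within => /(@nbhs_normP R 'rV[R]_n z) [del del0 H].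
by exists del => // p Ap zp; apply: H.
Qed.

Section Eucl.
Variables (R : realType) (n : nat).
Local Notation vec := 'rV[R]_n.

Lemma e_diff (a b : vec) : dotv a a - dotv b b = dotv (a - b) (a + b).
Proof. by rewrite dotvBl !dotvDr (dotvC b a); ring. Qed.

Lemma e_add (u v : vec) t :
  dotv (u + t *: v) (u + t *: v) = dotv u u + 2 * t * dotv u v + t ^+ 2 * dotv v v.
Proof. by rewrite !dotvDl !dotvDr !dotvZl !dotvZr (dotvC v u); ring. Qed.

Lemma e_cont (q : vec) c : 0 <= c -> continuous (fun v : vec => c * dotv (v - q) (v - q)).
Proof.
move=> c0; apply: loclip_cont => x.
exists (c * (n%:R * (2 * `|x - q| + 1))), 1; split => //; split.
  by rewrite mulr_ge0 // mulr_ge0 // addr_ge0 // mulr_ge0.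
move=> y xy1.
rewrite -mulrBr e_diff normrM ger0_norm // -mulrA ler_wpM2l //.
have hb := dotv_bound (x - q - (y - q)) (x - q + (y - q)).
apply: le_trans hb _.
rewrite (_ : x - q - (y - q) = x - y); last by rewrite opprB addrA subrK.
rewrite mulrAC ler_wpM2r // ler_wpM2l //.
have : `|x - q + (y - q)| <= `|x - q| + `|y - q| by exact: ler_normD.
have : `|y - q| <= `|x - q| + `|x - y|.
  by have := ler_distD x y q; rewrite (distrC y x); lra.
lra.
Qed.

End Eucl.
Section Moreau.
Variables (R : realType) (n : nat) (nrm : 'rV[R]_n -> R) (Q : set 'rV[R]_n)
  (d : 'rV[R]_n -> R) (d' : 'rV[R]_n -> 'rV[R]_n).
Hypothesis Hn : is_norm nrm.
Hypothesis cQ : convex_setv Q.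
Hypothesis clQ : closed Q.
Hypothesis Hdg : dist_gen nrm Q d d'.
Local Notation vec := 'rV[R]_n.

Lemma d_ge0 y : Q y -> 0 <= d y. Proof. by case: Hdg => H _ _ _ _; exact: H. Qed.
Lemma d_cont : {within Q, continuous d}. Proof. by case: Hdg. Qed.
Lemma d_sc : strongly_convex1 nrm Q d. Proof. by case: Hdg. Qed.
Lemma d'_sub x : Qo Q d x -> subdiff Q d x (d' x). Proof. by case: Hdg => _ _ _ H _; exact: H. Qed.
Lemma d'_cont : {within Qo Q d, continuous d'}. Proof. by case: Hdg. Qed.

Lemma moreau (q : vec) (M : R) : Q q -> 0 < M ->
  exists p, [/\ Q p, subdiff Q d p (M *: (q - p)) &
                 M / 2 * dotv (p - q) (p - q) <= d q].
Proof.
move=> Qq M0.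
pose g := fun v : vec => M / 2 * dotv (v - q) (v - q).
pose F := fun v : vec => d v + g v.
have gc : continuous g by apply: e_cont; rewrite divr_ge0 // ltW.
have dq0 := d_ge0 Qq.
pose K := Q `&` [set y : vec | g y <= d q].
have Kq : K q by split => //; rewrite /= /g subrr dotv0r mulr0.
have clK : closed K.
  by apply: closedI => //; apply: (closed_comp _ (@closed_le _ (d q))) => v _; exact: gc.
have bK : bounded_set K.
  apply: (@bnd_set _ _ _ (`|q| + 1 + 2 * d q / M)) => y [_ /=].
  rewrite /g => hy.
  have h1 := norm_sq_le (y - q).
  have h2 : `|y - q| ^+ 2 <= 2 * d q / M.
    rewrite ler_pdivlMr //; have := ler_wpM2r (ltW M0) h1; lra.
  have h3 : `|y| <= `|y - q| + `|q| by rewrite -{1}(subrK q y); exact: ler_normD.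
  set t := `|y - q| in h2 h3.
  have t0 : 0 <= t by exact: normr_ge0.
  have : t <= 1 + t ^+ 2 by rewrite expr2; nra.
  lra.
have cK : compact K by exact: bounded_closed_compact.
have Fc : {within K, continuous F}.
  apply/subspace_continuousP => x Kx.
  have dK : {within K, continuous d} by apply: continuous_subspaceW d_cont => y [].
  have gK : {within K, continuous g} := continuous_subspaceT gc.
  apply: cvgD.
    exact: (proj1 (subspace_continuousP K d) dK) x Kx.
  exact: (proj1 (subspace_continuousP K g) gK) x Kx.
have [p pK pmin] := EVT_min_rV (ex_intro _ q Kq) cK Fc.
have {}pmin : forall t, t \in K -> F p <= F t := pmin.
move: pK; rewrite inE => -[Qp gp].
have Fmin : forall y, Q y -> F p <= F y.
  move=> y Qy; have [gy|gy] := boolP (g y <= d q).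
    by apply: pmin; rewrite inE.
  have := pmin q; rewrite inE => /(_ Kq).
  have : 0 <= d y := d_ge0 Qy.
  rewrite /F /g subrr dotv0r mulr0 addr0; rewrite -ltNge /g in gy.
  set E := dotv (y - q) (y - q) in gy *; set E' := dotv (p - q) (p - q).
  lra.
have H3 : M / 2 * dotv (p - q) (p - q) <= d q.
  have := Fmin q Qq; rewrite /F /g subrr dotv0r mulr0 addr0.
  have := d_ge0 Qp; lra.
exists p; split => //.
move=> y Qy; rewrite -subr_le0.
rewrite (_ : d p + dotv (M *: (q - p)) (y - p) - d y =
             d p - d y - M * dotv (p - q) (y - p)); last first.
  by rewrite dotvZl -(opprB p q) dotvNl; ring.
apply: (@lim_lem2 _ _ (M / 2 * dotv (y - p) (y - p))).
  by apply: mulr_ge0; [rewrite divr_ge0 // ltW | exact: dotv_sq_ge0].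
move=> t /andP[t0 t1].
have ht : 0 <= t <= 1 by rewrite (ltW t0) t1.
have Qt := cQ Qy Qp ht.
have h1 := Fmin _ Qt.
have h2 := d_conv d_sc Qy Qp ht.
have e1 : t *: y + (1 - t) *: p - q = (p - q) + t *: (y - p).
  by rewrite -(comb_sub t y p) [RHS]addrC addrA subrK.
rewrite /F /g e1 e_add in h1.
set D1 := dotv (p - q) (y - p) in h1 *.
set E1 := dotv (y - p) (y - p) in h1 *.
set E0 := dotv (p - q) (p - q) in h1 *.
set dt := d (t *: y + (1 - t) *: p) in h1 h2.
rewrite -(ler_pM2l t0).
lra.
Qed.

End Moreau.
Section Opt.
Variables (R : realType) (n : nat) (nrm : 'rV[R]_n -> R) (Q : set 'rV[R]_n)
  (d : 'rV[R]_n -> R) (d' : 'rV[R]_n -> 'rV[R]_n).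
Hypothesis Hn : is_norm nrm.
Hypothesis cQ : convex_setv Q.
Hypothesis clQ : closed Q.
Hypothesis Hdg : dist_gen nrm Q d d'.
Local Notation vec := 'rV[R]_n.

Lemma opt_Qo (phi : vec -> R) (a : vec) (Lc : R) (z : vec) :
  0 < Lc -> (forall y w, phi y - phi w = dotv a (y - w)) ->
  is_argmin Q (fun y => phi y + Lc * d y) z -> Qo Q d z.
Proof.
move=> L0 hphi [Qz zmin]; split => //; exists (- (Lc^-1 *: a)) => y Qy.
have h1 := zmin y Qy; have h2 := hphi y z.
rewrite dotvNl dotvZl -(ler_pM2l L0) mulrDr mulrN mulrA mulfV ?gt_eqF // mul1r.
rewrite /= in h1; lra.
Qed.

Lemma opt_key (phi : vec -> R) (a : vec) (Lc : R) (z : vec) :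
  0 < Lc -> (forall y w, phi y - phi w = dotv a (y - w)) ->
  is_argmin Q (fun y => phi y + Lc * d y) z ->
  forall y, Q y -> phi z + Lc * d z + Lc * bregman d d' z y <= phi y + Lc * d y.
Proof.
move=> L0 hphi hz; have zQo := opt_Qo L0 hphi hz.
move: hz => [Qz zmin] y Qy.
suff S0 : 0 <= dotv a (y - z) + Lc * dotv (d' z) (y - z).
  rewrite /bregman; have := hphi y z; lra.
have claim : forall w, Qo Q d w -> 0 <= dotv a (w - z) + Lc * dotv (d' w) (w - z).
  move=> w Qow; have sw := d'_sub Hdg Qow Qz.
  have h1 := zmin w Qow.1; have h2 := hphi w z.
  rewrite -(opprB w z) dotvNr in sw.
  have := ler_wpM2l (ltW L0) sw; rewrite /= in h1; lra.
set v := y - z.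
set S := dotv a v + Lc * dotv (d' z) v.
rewrite leNgt; apply/negP => Sneg.
set c := - S.
have c0 : 0 < c by rewrite /c oppr_gt0.
set K1 := n%:R * `|v|.
have K10 : 0 <= K1 by rewrite mulr_ge0.
set eta := c / (2 * (Lc * K1 + 1)).
have LK0 : 0 < Lc * K1 + 1 by rewrite ltr_wpDl // mulr_ge0 // ltW.
have eta0 : 0 < eta by rewrite divr_gt0 // mulr_gt0.
have etaE : (Lc * K1 + 1) * eta = c / 2 by rewrite /eta; field; rewrite gt_eqF.
have [del del0 Hdel] := within_cont zQo (d'_cont Hdg) eta0.
set lam := Num.min 1 (del / (2 * (`|v| + 1))).
have v1 : 0 < `|v| + 1 by rewrite ltr_wpDl.
have lam0 : 0 < lam by rewrite lt_min ltr01 divr_gt0 // mulr_gt0.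
have lam1 : lam <= 1 by rewrite ge_min lexx.
have lamv : lam * `|v| < del / 2.
  have h1 : lam <= del / (2 * (`|v| + 1)) by rewrite ge_min lexx orbT.
  have h2 := ler_wpM2r (normr_ge0 v) h1.
  have h3 : del / (2 * (`|v| + 1)) * `|v| = del / 2 * (`|v| / (`|v| + 1)).
    by field; rewrite gt_eqF.
  have h4 : `|v| / (`|v| + 1) < 1 by rewrite ltr_pdivrMr //; lra.
  have h5 : del / 2 * (`|v| / (`|v| + 1)) < del / 2 * 1.
    by rewrite ltr_pM2l // divr_gt0.
  lra.
have hl : 0 <= lam <= 1 by rewrite (ltW lam0) lam1.
set q := lam *: y + (1 - lam) *: z.
have Qq : Q q := cQ Qy Qz hl.
have qz : q - z = lam *: v by rewrite /q comb_sub.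
set Gz := `|a + Lc *: d' z|.
set K2 := n%:R * (Gz + Lc * eta) + 1.
have K2n : 0 <= n%:R * (Gz + Lc * eta).
  by apply: mulr_ge0 => //; apply: addr_ge0; [exact: normr_ge0 | apply: mulr_ge0; apply: ltW].
have K20 : 0 < K2 by rewrite /K2; lra.
set eps := Num.min (del / 2) (lam * c / (4 * K2)).
have eps0 : 0 < eps by rewrite lt_min !divr_gt0 // ?mulr_gt0.
have eps1 : eps <= del / 2 by rewrite ge_min lexx.
have eps2 : eps <= lam * c / (4 * K2) by rewrite ge_min lexx orbT.
have dq0 := d_ge0 Hdg Qq.
set M := 2 * (d q + 1) / eps ^+ 2.
have M0 : 0 < M by rewrite /M divr_gt0 ?exprn_gt0 // mulr_gt0 //; lra.
have [p [Qp sp Hp]] := moreau cQ clQ Hdg Qq M0.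
have Qop : Qo Q d p by split => //; exists (M *: (q - p)).
have pq : `|p - q| < eps.
  have h1 := norm_sq_le (p - q).
  have h2 : M / 2 = (d q + 1) / eps ^+ 2 by rewrite /M; field; rewrite gt_eqF.
  rewrite h2 in Hp.
  set E := dotv (p - q) (p - q) in h1 Hp.
  have h3 : (d q + 1) * E <= d q * eps ^+ 2.
    have := ler_wpM2r (ltW (exprn_gt0 2 eps0)) Hp.
    have -> : (d q + 1) / eps ^+ 2 * E * eps ^+ 2 = (d q + 1) * E.
      by field; rewrite gt_eqF.
    done.
  have E0 : 0 <= E by exact: dotv_sq_ge0.
  have h4 : E < eps ^+ 2 by nra.
  have t0 := normr_ge0 (p - q).
  nra.
have pz : `|z - p| < del.
  have h1 : `|z - p| <= `|z - q| + `|q - p| by exact: ler_distD.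
  rewrite (distrC z q) qz normrZ ger0_norm ?(ltW lam0) // (distrC q p) in h1.
  lra.
have Hd := Hdel p Qop pz.
have b1 : Lc * dotv (d' p) v <= Lc * dotv (d' z) v + c / 2.
  have e1 : dotv (d' p) v = dotv (d' z) v + dotv (d' p - d' z) v.
    by rewrite dotvBl addrC subrK.
  have h1 := dotv_bound (d' p - d' z) v.
  rewrite (distrC (d' p)) in h1.
  have h2 : n%:R * `|d' z - d' p| * `|v| <= K1 * eta.
    have h5 := ler_wpM2l (ler0n _ n) (ltW Hd).
    have h6 := ler_wpM2r (normr_ge0 v) h5.
    rewrite /K1; lra.
  have h3 : dotv (d' p - d' z) v <= K1 * eta.
    apply: le_trans h2; apply: le_trans h1; exact: ler_norm.
  have h4 := ler_wpM2l (ltW L0) h3.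
  rewrite e1; have : Lc * (K1 * eta) <= c / 2.
    by rewrite -etaE mulrA mulrDl mul1r lerDl ltW.
  lra.
have b2 : dotv a (p - q) + Lc * dotv (d' p) (p - q) <= lam * c / 4.
  have e1 : dotv a (p - q) + Lc * dotv (d' p) (p - q) = dotv (a + Lc *: d' p) (p - q).
    by rewrite dotvDl dotvZl.
  rewrite e1.
  have hG : `|a + Lc *: d' p| <= Gz + Lc * eta.
    have -> : a + Lc *: d' p = (a + Lc *: d' z) + Lc *: (d' p - d' z).
      by rewrite scalerBr addrA addrAC addrK.
    apply: le_trans (ler_normD _ _) _; rewrite normrZ gtr0_norm // lerD2l.
    by rewrite ler_wpM2l ?ltW // (distrC (d' p)).
  have h1 := dotv_bound (a + Lc *: d' p) (p - q).
  have h2 : n%:R * `|a + Lc *: d' p| * `|p - q| <= K2 * eps.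
    have h3 : n%:R * `|a + Lc *: d' p| <= K2 - 1.
      by rewrite /K2 addrK ler_wpM2l.
    have h4 := ler_wpM2r (normr_ge0 (p - q)) h3.
    have h5 : (K2 - 1) * `|p - q| <= K2 * eps.
      have : 0 <= K2 - 1 by rewrite /K2 addrK.
      nra.
    lra.
  have h6 : K2 * eps <= lam * c / 4.
    have := ler_wpM2l (ltW K20) eps2.
    have -> : K2 * (lam * c / (4 * K2)) = lam * c / 4 by field; rewrite gt_eqF.
    done.
  have h7 := ler_norm (dotv (a + Lc *: d' p) (p - q)).
  lra.
have hc := claim p Qop.
have e2 : p - z = lam *: v + (p - q) by rewrite -qz [RHS]addrC addrA subrK.
rewrite e2 (dotvDr (lam *: v) (p - q) a) (dotvDr (lam *: v) (p - q) (d' p)) !dotvZr in hc.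
have h8 : lam * (dotv a v + Lc * dotv (d' p) v) <= lam * (S + c / 2).
  have h9 : dotv a v + Lc * dotv (d' p) v <= S + c / 2 by rewrite /S; lra.
  by have := ler_wpM2l (ltW lam0) h9.
have Sc : S = - c by rewrite /c opprK.
rewrite Sc in h8; have lc := mulr_gt0 lam0 c0.
lra.
Qed.

End Opt.

Section Lin.
Variables (R : realType) (n : nat).
Local Notation vec := 'rV[R]_n.

Lemma dotv_sum m (F : 'I_m -> vec) (w : vec) :
  dotv (\sum_i F i) w = \sum_i dotv (F i) w.
Proof. exact: (big_morph (fun v => dotv v w) (fun a b => dotvDl a b w) (dotv0l w)). Qed.

Lemma linmod_diff (f : vec -> R) g xk y w :
  linmod f g xk y - linmod f g xk w = dotv (g xk) (y - w).
Proof. by rewrite /linmod !dotvBr; ring. Qed.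

Lemma linmod_comb (f : vec -> R) g xk (a : R) p q :
  linmod f g xk (a *: p + (1 - a) *: q) =
  a * linmod f g xk p + (1 - a) * linmod f g xk q.
Proof. by rewrite /linmod !dotvBr dotvDr !dotvZr; ring. Qed.

End Lin.

Unset Implicit Arguments.
Theorem theorem2 (R : realType) (n : nat)
  (nrm : 'rV[R]_n -> R) (Q : set 'rV[R]_n)
  (f : 'rV[R]_n -> R) (gradf : 'rV[R]_n -> 'rV[R]_n) (L : R)
  (d : 'rV[R]_n -> R) (d' : 'rV[R]_n -> 'rV[R]_n)
  (xstar : 'rV[R]_n) (T : nat) (gamma Lt : nat -> R)
  (x z xhat u : nat -> 'rV[R]_n) :
  (* standing assumptions *)
  is_norm nrm ->
  closed Q -> convex_setv Q ->
  convex_funv f -> is_gradient f gradf ->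
  0 < L ->
  (forall y w, Q y -> Q w ->
     dual_norm nrm (gradf y - gradf w) <= L * nrm (y - w)) ->
  dist_gen nrm Q d d' ->
  (* x* minimizes f over Q *)
  is_argmin Q f xstar ->
  (* parameters *)
  0 < gamma 0%N <= 1 ->
  (forall t, (t <= T.+1)%N -> 0 <= gamma t) ->
  (forall t, (t <= T.+1)%N -> gamma t ^+ 2 <= Gam gamma t) ->
  (* initialisation *)
  Lt 0%N = L ->
  is_argmin Q d (x 0%N) -> d (x 0%N) = 0 ->
  is_argmin Q (fun y => gamma 0%N * linmod f gradf (x 0%N) y + Lt 0%N * d y)
    (u 0%N) ->
  z 0%N = u 0%N ->
  x 1%N = (gamma 1%N / Gam gamma 1%N) *: z 0%N
          + (1 - gamma 1%N / Gam gamma 1%N) *: u 0%N ->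
  is_prox Q d d' (z 0%N) ((gamma 1%N / Lt 0%N) *: gradf (x 1%N)) (xhat 1%N) ->
  u 1%N = (gamma 1%N / Gam gamma 1%N) *: xhat 1%N
          + (1 - gamma 1%N / Gam gamma 1%N) *: u 0%N ->
  (* iterations t = 1, ..., T *)
  (forall t, (1 <= t <= T)%N ->
     (0 < Lt t <= L) /\
         f (u t) <= linmod f gradf (x t) (u t) + Lt t / 2 * nrm (u t - x t) ^+ 2 /\
         is_argmin Q (fun y => \sum_(k < t.+1) gamma k * linmod f gradf (x k) y
                               + Lt t * d y) (z t) /\
         x t.+1 = (gamma t.+1 / Gam gamma t.+1) *: z t
                  + (1 - gamma t.+1 / Gam gamma t.+1) *: u t /\
         is_prox Q d d' (z t) ((gamma t.+1 / Lt t) *: gradf (x t.+1)) (xhat t.+1) /\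
         u t.+1 = (gamma t.+1 / Gam gamma t.+1) *: xhat t.+1
                  + (1 - gamma t.+1 / Gam gamma t.+1) *: u t) ->
  f (u T) - f xstar <=
    (Gam gamma T)^-1 *
      (Lt T * d xstar
       + \sum_(t < T) (Lt t - Lt t.+1) *
           (d (z t.+1) - 2^-1 * nrm (z t - xhat t.+1) ^+ 2)).

Proof.
move=> Hn clQ cQ cf gf L0 Lip Hdg [Qxs xsmin] /andP[g0 g01] gnn gsq Lt0
  [Qx0 x0min] dx0 u0min z0 x1 xh1 u1 iter.
pose lin k y := linmod f gradf (x k) y.
pose phi t y := \sum_(k < t.+1) gamma k * lin k y.
pose psi t y := phi t y + Lt t * d y.
pose E t := \sum_(s < t) (Lt s - Lt s.+1) *
           (d (z s.+1) - 2^-1 * nrm (z s - xhat s.+1) ^+ 2).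
have phiA : forall t y w, phi t y - phi t w =
    dotv (\sum_(k < t.+1) gamma k *: gradf (x k)) (y - w).
  move=> t y w; rewrite /phi -sumrB dotv_sum; apply: eq_bigr => k _.
  by rewrite -mulrBr /lin linmod_diff dotvZl.
have zarg : forall t, (t <= T)%N -> is_argmin Q (psi t) (z t).
  case=> [|t] tT.
    rewrite z0; case: u0min => Qu Hu; split => // y Qy.
    by rewrite /psi /phi !big_ord1; exact: Hu.
  by have [_ [_ [H _]]] := iter t.+1 tT.
have Lpos : forall t, (t <= T)%N -> 0 < Lt t.
  case=> [|t] tT; first by rewrite Lt0.
  by have [/andP[H _] _] := iter t.+1 tT.
have Gam_split : forall t, Gam gamma t.+1 = Gam gamma t + gamma t.+1.
  by move=> t; rewrite /Gam big_ord_recr.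
have Gpos : forall t, (t <= T.+1)%N -> 0 < Gam gamma t.
  elim=> [|t IH] tT; first by rewrite /Gam big_ord1.
  rewrite Gam_split; have := IH (ltnW tT); have := gnn _ tT; lra.
have data : forall t, (t < T)%N ->
    [/\ x t.+1 = (gamma t.+1 / Gam gamma t.+1) *: z t
                  + (1 - gamma t.+1 / Gam gamma t.+1) *: u t,
        is_prox Q d d' (z t) ((gamma t.+1 / Lt t) *: gradf (x t.+1)) (xhat t.+1) &
        u t.+1 = (gamma t.+1 / Gam gamma t.+1) *: xhat t.+1
                  + (1 - gamma t.+1 / Gam gamma t.+1) *: u t].
  case=> [|t] tT; first by split.
  by have [_ [_ [_ [H1 [H2 H3]]]]] := iter t.+1 (ltnW tT).
have claim : forall t, (t <= T)%N -> Gam gamma t * f (u t) <= psi t (z t) + E t.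
  elim=> [|t IH] tT.
    rewrite /Gam /E big_ord1 big_ord0 addr0 z0 /psi /phi big_ord1 Lt0.
    case: u0min => Qu _.
    have hd := descent Hn cQ cf gf Lip (ltW L0) Qx0 Qu.
    have s0 : subdiff Q d (x 0%N) 0.
      by move=> y Qy; rewrite dotv0l addr0; exact: x0min.
    have hs := sc_sub cQ (d_sc Hdg) Qx0 Qu s0.
    rewrite dotv0l dx0 in hs.
    set N2 := nrm (u 0%N - x 0%N) ^+ 2 in hd hs.
    have N20 : 0 <= N2 by exact: sqr_ge0.
    have h1 := ler_wpM2l (ltW g0) hd.
    have h2 : gamma 0%N * (L / 2 * N2) <= L / 2 * N2.
      by apply: ler_piMl => //; rewrite mulr_ge0 // divr_ge0 // ltW.
    have h3 := ler_wpM2l (ltW L0) hs.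
    rewrite /lin /linmod; lra.
  have IH' := IH (ltnW tT).
  have [hx hxh hu] := data t tT.
  have [/andP[L'0 L'L] [hdesc [zarg' _]]] := iter t.+1 tT.
  have GP : 0 < Gam gamma t.+1 := Gpos _ (leqW tT).
  have GtP : 0 < Gam gamma t := Gpos _ (leqW (ltnW tT)).
  have g1P : 0 <= gamma t.+1 := gnn _ (leqW tT).
  have g1sq : gamma t.+1 ^+ 2 <= Gam gamma t.+1 := gsq _ (leqW tT).
  have GE := Gam_split t.
  have LtP : 0 < Lt t := Lpos t (ltnW tT).
  have [Qxh hxmin] := hxh.
  have Qz' := zarg'.1.
  have zt := zarg t (ltnW tT).
  have Qzt := zt.1.
  set G := Gam gamma t.+1 in GP g1sq GE hx hu hxh *.
  set g1 := gamma t.+1 in g1P g1sq GE hx hu hxh hxmin *.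
  set tau := g1 / G in hx hu hxh *.
  have tau0 : 0 <= tau by rewrite divr_ge0 // ltW.
  have diff : u t.+1 - x t.+1 = tau *: (xhat t.+1 - z t).
    by rewrite hu hx opprD addrACA subrr addr0 scalerBr.
  set N := nrm (z t - xhat t.+1).
  have nd : nrm (u t.+1 - x t.+1) = tau * N.
    by rewrite diff (nrmZ Hn) ger0_norm // (nrmB Hn).
  rewrite nd in hdesc.
  have hl : linmod f gradf (x t.+1) (u t.+1) =
      tau * linmod f gradf (x t.+1) (xhat t.+1) + (1 - tau) * linmod f gradf (x t.+1) (u t).
    by rewrite {1}hu linmod_comb.
  rewrite hl in hdesc.
  have hg : linmod f gradf (x t.+1) (u t) <= f (u t) := grad_ineq cf gf _ _.
  have e3 : G * tau = g1 by rewrite /tau; field; rewrite gt_eqF.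
  have e4 : G * (1 - tau) = Gam gamma t by rewrite mulrBr mulr1 e3; lra.
  have e5 : G * (Lt t.+1 / 2 * (tau * N) ^+ 2) = Lt t.+1 / 2 * N ^+ 2 * (g1 ^+ 2 / G).
    by rewrite /tau; field; rewrite gt_eqF.
  have e6 : g1 ^+ 2 / G <= 1 by rewrite ler_pdivrMr // mul1r.
  have e7 : Lt t.+1 / 2 * N ^+ 2 * (g1 ^+ 2 / G) <= Lt t.+1 / 2 * N ^+ 2.
    by apply: ler_piMr => //; rewrite mulr_ge0 ?sqr_ge0 // divr_ge0 // ltW.
  set lx := linmod f gradf (x t.+1) (xhat t.+1) in hdesc *.
  set lu := linmod f gradf (x t.+1) (u t) in hdesc hg *.
  have p1 : G * (tau * lx) = g1 * lx by rewrite mulrA e3.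
  have p2 : G * ((1 - tau) * lu) = Gam gamma t * lu by rewrite mulrA e4.
  have A1 := ler_wpM2l (ltW GP) hdesc.
  have A2 := ler_wpM2l (ltW GtP) hg.
  have hk := opt_key cQ clQ Hdg LtP (phiA t) zt Qz'.
  have hp := hxmin _ Qz'.
  rewrite !dotvZl in hp.
  have hp2 := ler_wpM2l (ltW LtP) hp.
  have q1 : forall D, Lt t * (g1 / Lt t * D) = g1 * D.
    by move=> D; field; rewrite gt_eqF.
  have ld1 := linmod_diff f gradf (x t.+1) (xhat t.+1) (z t).
  have ld2 := linmod_diff f gradf (x t.+1) (z t.+1) (z t).
  rewrite -/lx in ld1.
  have ztQo := opt_Qo LtP (phiA t) zt.
  have hs := sc_sub cQ (d_sc Hdg) Qzt Qxh (d'_sub Hdg ztQo).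
  rewrite (nrmB Hn) -/N in hs.
  have hV : Lt t * (2^-1 * N ^+ 2) <= Lt t * bregman d d' (z t) (xhat t.+1).
    by apply: ler_wpM2l; [exact: ltW | rewrite /bregman; lra].
  have ps : phi t.+1 (z t.+1) =
      phi t (z t.+1) + g1 * linmod f gradf (x t.+1) (z t.+1).
    by rewrite /phi big_ord_recr.
  have Es : E t.+1 = E t + (Lt t - Lt t.+1) * (d (z t.+1) - 2^-1 * N ^+ 2).
    by rewrite /E big_ord_recr.
  rewrite /psi ps Es; rewrite /psi in IH' hk.
  set D1 := dotv (gradf (x t.+1)) (xhat t.+1 - z t) in hp2 ld1.
  set D2 := dotv (gradf (x t.+1)) (z t.+1 - z t) in hp2 ld2.
  have q1a := q1 D1.
  have q1b := q1 D2.
  have pg1 : g1 * D1 = g1 * lx - g1 * linmod f gradf (x t.+1) (z t) by rewrite -ld1 mulrBr.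
  have pg2 : g1 * D2 = g1 * linmod f gradf (x t.+1) (z t.+1) - g1 * linmod f gradf (x t.+1) (z t).
    by rewrite -ld2 mulrBr.
  lra.
have hT := claim T (leqnn T).
have [QzT zTmin] := zarg T (leqnn T).
have h1 := zTmin xstar Qxs.
have h2 : phi T xstar <= Gam gamma T * f xstar.
  rewrite /phi /Gam mulr_suml; apply: ler_sum => k _.
  apply: ler_wpM2l; first exact: gnn _ (ltnW (ltn_ord k)).
  exact: grad_ineq cf gf _ _.
have GT := Gpos T (leqW (leqnn T)).
rewrite -(ler_pM2l GT) mulrA mulfV ?gt_eqF // mul1r -/(E T).
rewrite /psi in h1 hT.
lra.
Qed.
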